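(* Let $(L,\wedge,\vee,0,1)$ be a bounded lattice. Then its additive Nakano mosaic $(L,\boxplus,0)$, where $x\boxplus y:=\{z\in L\mid x\vee y=x\vee z=z\vee y\}$, is an L-mosaic.
   Context: For a multioperation $\boxplus:A\times A\to\wp(A)$ and subsets $X,Y$, $X\boxplus Y:=\bigcup_{x\in X,y\in Y}x\boxplus y$. A commutative mosaic $(A,\boxplus,e)$: $x\boxplus y=y\boxplus x$, $e\boxplus x=\{x\}$ for all $x$, and for some endofunction $\rho$, $z\in x\boxplus y$ implies $x\in z\boxplus\rho(y)$ and $y\in\rho(x)\boxplus z$. An L-mosaic is a commutative mosaic $(A,\boxplus,0)$ such that: (Lms1) $0,x\in x\boxplus x$ for all $x$; (Lms2) $(x\boxplus x)\boxplus(x\boxplus x)=x\boxplus x$ for all $x$; (Lms3) $(x\boxplus(x\boxplus y))\cap((x\boxplus y)\boxplus y)\subseteq x\boxplus y$ for all $x,y$; (Lms4) for all $x,y$ there is a unique $z\in x\boxplus y$ with $x,y\in z\boxplus z$. *)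

(* Defs.v *)
From HB Require Import structures.
From mathcomp Require Import all_boot all_order.
Set Implicit Arguments. Unset Strict Implicit. Unset Printing Implicit Defensive.
Import Order.TTheory.

(* Subsets of A are predicates A -> Prop. A multioperation A x A -> P(A) is
   [m : A -> A -> (A -> Prop)]; [m x y z] means z \in x (+) y. *)
Definition multiop (A : Type) := A -> A -> A -> Prop.

Definition mlift (A : Type) (m : multiop A) (X Y : A -> Prop) : A -> Prop :=
  fun z => exists x y, X x /\ Y y /\ m x y z.

Definition sing (A : Type) (a : A) : A -> Prop := fun z => z = a.

Definition commutative_mosaic (A : Type) (m : multiop A) (e : A) : Prop :=
  (forall x y z, m x y z <-> m y x z) /\
  (forall x z, m e x z <-> z = x) /\
  (exists rho : A -> A, forall x y z,
      m x y z -> m z (rho y) x /\ m (rho x) z y).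

Definition L_mosaic (A : Type) (m : multiop A) (zero : A) : Prop :=
  commutative_mosaic m zero /\
  (forall x, m x x zero /\ m x x x) /\
  (forall x z, mlift m (m x x) (m x x) z <-> m x x z) /\
  (forall x y z, mlift m (sing x) (m x y) z -> mlift m (m x y) (sing y) z ->
      m x y z) /\
  (forall x y, exists z, (m x y z /\ m z z x /\ m z z y) /\
      forall z', m x y z' /\ m z' z' x /\ m z' z' y -> z' = z).

Definition nakano_add (d : Order.disp_t) (L : latticeType d) : multiop L :=
  fun x y z => (x `|` y = x `|` z)%O /\ (x `|` z = z `|` y)%O.

(* Main.v *)
Require Import Defs.
From mathcomp Require Import all_boot all_order.
From Stdlib Require Import Setoid.
Import Order.TTheory.
Open Scope order_scope.

Section S.
Variables (d : Order.disp_t) (L : latticeType d).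
Implicit Types x y z : L.

Lemma nakE x y z : nakano_add x y z <->
  [/\ z <= x `|` y, x <= y `|` z & y <= x `|` z].
Proof.
split.
- case=> h1 h2; split.
  + by rewrite h1 leUr.
  + by rewrite joinC -h2 leUl.
  + by rewrite -h1 leUr.
- case=> h1 h2 h3; have h2' : x <= z `|` y by rewrite joinC.
  by split; apply/le_anti; rewrite !leUx ?leUl ?leUr ?h1 ?h2' ?h3.
Qed.
End S.

Theorem mainTheorem8 (d : Order.disp_t) (L : tbLatticeType d) :
  L_mosaic (@nakano_add d L) (\bot%O : L).
Proof.
split; [split; [|split]|split; [|split; [|split]]].
- move=> x y z; rewrite !nakE; split; case=> a b c; split => //; by rewrite joinC.
- move=> x z; rewrite nakE; split.
  + case=> a _ c; apply/le_anti; move: a c; rewrite !join0x => -> ->//.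
  + by move=> ->; split; rewrite ?le0x ?lexx ?leUr ?joinxx.
- exists id => x y z; rewrite !nakE; case=> a b c.
  have a' := a; have b' := b; have c' := c.
  rewrite joinC in a'; rewrite joinC in b'; rewrite joinC in c'.
  by split; split.
- by move=> x; rewrite !nakE !joinxx; split; split; rewrite ?le0x ?lexx ?leUl ?joinx0 ?join0x.
- move=> x z; rewrite /mlift; split.
  + case=> a [b [/nakE [a1 _ _] [/nakE [b1 _ _] /nakE [c1 _ _]]]].
    move: a1 b1; rewrite !joinxx => a1 b1.
    apply/nakE; rewrite !joinxx; split; rewrite ?leUl ?leUr //.
    by rewrite (le_trans c1) // leUx a1 b1.
  + move=> /nakE [h _ _]; move: h; rewrite joinxx => h.
    exists z, z; split; [|split]; apply/nakE; rewrite !joinxx ?lexx ?h //.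
    1,2: by split; rewrite ?leUl.
- move=> x y z [a [w [ea [/nakE [a1 a2 a3] /nakE [b1 b2 b3]]]]].
  move=> [w' [b [/nakE [c1 c2 c3] [eb /nakE [e1 e2 e3]]]]].
  rewrite /sing in ea eb; subst a b.
  apply/nakE; split.
  + apply: le_trans b1 _. by rewrite leUx leUl a1.
  + apply: le_trans c2 _. by rewrite leUx leUl e2.
  + apply: le_trans a3 _. by rewrite leUx leUl b3.
- move=> x y; exists (x `|` y); split.
  + have h1 : nakano_add x y (x `|` y).
      apply/nakE; split; first exact: lexx.
        by rewrite joinCA joinxx leUl.
      by rewrite joinA joinxx leUr.
    have h2 : forall u, u <= x `|` y -> nakano_add (x `|` y) (x `|` y) u.
      by move=> u hu; apply/nakE; rewrite joinxx; split; rewrite ?leUl.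
    by split; [|split]; [|apply: h2; rewrite ?leUl ?leUr..].
  + move=> z' [/nakE [a _ _] [/nakE [e _ _] /nakE [f _ _]]].
    move: e f; rewrite !joinxx => e f.
    by apply/le_anti; rewrite a leUx e f.
Qed.
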